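(* Let $r\ge1$, let $a_1,\dots,a_r\ge 2$ and $a,b$ be positive integers, and let $H_1,\dots,H_r$ be graphs. If $\max\{a_1,\dots,a_r\}\le a$ and $\max\{cl(H_1),\dots,cl(H_r)\}\le b$, then $$F_v(K_{a_1}[H_1],\dots,K_{a_r}[H_r];ab+1)\le F_v(a_1,\dots,a_r;a+1)\,F_v(H_1,\dots,H_r;b+1).$$
   Context: All graphs are finite and simple. ''A graph $F$ contains $H$'' means $F$ has a (not necessarily induced) subgraph isomorphic to $H$. An integer $a$ used in place of a graph denotes $K_a$. $cl(H)$ is the clique number of $H$. $G\rightarrow(H_1,\dots,H_r)^v$ means: for every partition $V(G)=X_1\cup\dots\cup X_r$ there is $i$ such that the subgraph induced by $X_i$ contains $H_i$. $\mathcal{F}_v(H_1,\dots,H_r;k)$ is the set of $K_k$-free graphs $G$ with $G\rightarrow(H_1,\dots,H_r)^v$, and the vertex Folkman number $F_v(H_1,\dots,H_r;k)$ is the minimum number of vertices of a graph in this set (these numbers are finite when $k>\max_i cl(H_i)$). The lexicographic product $G[H]$ has vertex set $V(G)\times V(H)$, with $\{(u_1,v_1),(u_2,v_2)\}$ an edge iff $\{u_1,u_2\}\in E(G)$, or $u_1=u_2$ and $\{v_1,v_2\}\in E(H)$. *)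

(* Defs.v *)
From mathcomp Require Import all_boot.
Set Implicit Arguments. Unset Strict Implicit. Unset Printing Implicit Defensive.

Record sgraph := SGraph {
  V : finType;
  adj : rel V;
  adj_sym : symmetric adj;
  adj_irr : irreflexive adj }.

Definition contains (F H : sgraph) : Prop :=
  exists f : V H -> V F, injective f /\ forall x y, adj x y -> adj (f x) (f y).

Definition contains_in (G : sgraph) (X : {set V G}) (H : sgraph) : Prop :=
  exists f : V H -> V G, injective f /\ (forall x, f x \in X) /\
    forall x y, adj x y -> adj (f x) (f y).

Lemma K_sym k : symmetric (fun x y : 'I_k => x != y).
Proof. by move=> x y; rewrite eq_sym. Qed.
Lemma K_irr k : irreflexive (fun x y : 'I_k => x != y).
Proof. by move=> x; rewrite eqxx. Qed.
Definition K (k : nat) : sgraph := SGraph (@K_sym k) (@K_irr k).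

Definition is_clique (G : sgraph) (S : {set V G}) : bool :=
  [forall x in S, forall y in S, (x != y) ==> adj x y].
Definition clique_number (G : sgraph) : nat :=
  \max_(S : {set V G} | is_clique S) #|S|.

Definition lex_adj (G H : sgraph) (p q : V G * V H) : bool :=
  adj p.1 q.1 || ((p.1 == q.1) && adj p.2 q.2).
Arguments lex_adj : clear implicits.
Lemma lex_sym (G H : sgraph) : symmetric (lex_adj G H).
Proof. move=> [u1 v1] [u2 v2]; rewrite /lex_adj /= (@adj_sym G u1) (@eq_sym _ u1) (@adj_sym H v1). by []. Qed.
Lemma lex_irr (G H : sgraph) : irreflexive (lex_adj G H).
Proof. move=> [u v]; by rewrite /lex_adj /= (@adj_irr G) (@adj_irr H) andbF. Qed.
Definition lex (G H : sgraph) : sgraph := SGraph (@lex_sym G H) (@lex_irr G H).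

(* G -> (H_1,...,H_r)^v : every partition V(G) = X_1 u ... u X_r (given as a
   colouring c : V G -> 'I_r, X_i = c^-1(i)) has some i with G[X_i] containing H_i. *)
Definition arrows (G : sgraph) (r : nat) (Hs : 'I_r -> sgraph) : Prop :=
  forall c : V G -> 'I_r, exists i : 'I_r, contains_in [set x | c x == i] (Hs i).

Definition in_Fv (r : nat) (Hs : 'I_r -> sgraph) (k : nat) (G : sgraph) : Prop :=
  ~ contains G (K k) /\ arrows G Hs.

Definition is_Fv (r : nat) (Hs : 'I_r -> sgraph) (k : nat) (n : nat) : Prop :=
  (exists G, in_Fv Hs k G /\ #|V G| = n) /\
  (forall G, in_Fv Hs k G -> n <= #|V G|).

(* Main.v *)
From Stdlib Require Import Classical ClassicalEpsilon.
Require Import Defs.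
From mathcomp Require Import all_boot.

Lemma exmin (P : sgraph -> Prop) m :
  (exists G, P G /\ #|V G| = m) ->
  exists n, ((exists G, P G /\ #|V G| = n) /\ (forall G, P G -> n <= #|V G|)) /\ n <= m.
Proof.
elim: m {-2}m (leqnn m) => [|m IH] m0 hm [G [PG cG]].
  exists m0; split=> //; split; first by exists G.
  by move=> G' _; move: hm; rewrite leqn0 => /eqP ->.
case: (classic (forall G', P G' -> m0 <= #|V G'|)) => h.
  by exists m0; split=> //; split=> //; exists G.
move: h => /not_all_ex_not [G' h'].
have PG' : P G' by apply: NNPP => nP; apply: h' => /nP.
have lt : #|V G'| < m0 by rewrite ltnNge; apply/negP => hh; apply: h'.
have [n [hn le]] := IH #|V G'| (leq_trans lt hm) (ex_intro _ G' (conj PG' erefl)).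
by exists n; split=> //; apply: leq_trans le (ltnW lt).
Qed.

Lemma clique_le (G : sgraph) k (S : {set V G}) : ~ contains G (K k.+1) ->
  {in S &, forall x y, x != y -> adj x y} -> #|S| <= k.
Proof.
move=> nK cl; rewrite leqNgt; apply/negP => lt; apply: nK.
exists (fun i : 'I_k.+1 => enum_val (widen_ord lt i)); split.
  move=> i j /enum_val_inj /(congr1 val) /= h; exact: val_inj.
move=> i j /= ij; apply: cl; try exact: enum_valP.
rewrite (inj_eq enum_val_inj); apply: contra ij => /eqP /(congr1 val) /= h; apply/eqP; exact: val_inj.
Qed.

Lemma lex_free (G1 G2 : sgraph) a b :
  ~ contains G1 (K a.+1) -> ~ contains G2 (K b.+1) -> ~ contains (lex G1 G2) (K (a * b).+1).
Proof.
move=> n1 n2 [f [fi fa]].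
pose S := [set (f i).1 | i : 'I_(a * b).+1].
have hS : #|S| <= a.
  apply: (@clique_le G1 a S n1) => x y /imsetP [i _ ->] /imsetP [j _ ->] nij.
  have ij : i != j by apply: contraNneq nij => ->.
  move: (fa i j ij); rewrite /= /lex_adj (negbTE nij). by rewrite orbF.
have hT : forall u, #|[set i | (f i).1 == u]| <= b.
  move=> u.
  rewrite -(@card_in_imset _ _ (fun i => (f i).2)); last first.
    move=> i j; rewrite !inE => /eqP hi /eqP hj h2; apply: fi.
    by case: (f i) (f j) hi hj h2 => [x1 x2] [y1 y2] /= -> -> ->.
  apply: (@clique_le _ _ _ n2) => x y /imsetP [i] ; rewrite inE => /eqP hi -> /imsetP [j];
    rewrite inE => /eqP hj -> nij.
  have ij : i != j by apply: contraNneq nij => ->.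
  move: (fa i j ij); rewrite /= /lex_adj hi hj eqxx (@adj_irr G1) /=.
  by [].
have : (a * b).+1 <= a * b; last by rewrite ltnn.
have -> : (a * b).+1 = \sum_(i : 'I_(a * b).+1) 1 by rewrite sum1_card card_ord.
rewrite (partition_big (fun i => (f i).1) (mem S)) /=; last first.
  by move=> i _; apply/imsetP; exists i.
apply: (@leq_trans (\sum_(u in S) b)).
  apply: leq_sum => u _; apply: leq_trans (hT u).
  rewrite sum1_card cardsE; apply: eq_leq; apply: eq_card => i.
  by [].
by rewrite sum_nat_const leq_mul2r hS orbT.
Qed.

Lemma lex_arrows r (ai : 'I_r -> nat) (H : 'I_r -> sgraph) (G1 G2 : sgraph) :
  arrows G1 (fun i => K (ai i)) -> arrows G2 H ->
  arrows (lex G1 G2) (fun i => lex (K (ai i)) (H i)).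
Proof.
move=> ar1 ar2 c.
have hu : forall u : V G1, exists i, contains_in [set v | c (u, v) == i] (H i).
  by move=> u; apply: ar2.
pose d u := proj1_sig (constructive_indefinite_description _ (hu u)).
have hd : forall u, contains_in [set v | c (u, v) == d u] (H (d u)).
  by move=> u; rewrite /d; case: constructive_indefinite_description.
have [i [e [ei [ein ea]]]] := ar1 d.
have hk : forall k : 'I_(ai i), exists g : V (H i) -> V G2, injective g /\
    (forall x, g x \in [set v | c (e k, v) == i]) /\ forall x y, adj x y -> adj (g x) (g y).
  move=> k; have := ein k; rewrite inE => /eqP <-; exact: hd.
pose g k := proj1_sig (constructive_indefinite_description _ (hk k)).
have hg : forall k, injective (g k) /\
    (forall x, g k x \in [set v | c (e k, v) == i]) /\ forall x y, adj x y -> adj (g k x) (g k y).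
  by move=> k; rewrite /g; case: constructive_indefinite_description.
exists i; exists (fun p : 'I_(ai i) * V (H i) => (e p.1, g p.1 p.2)); split; [|split].
- move=> [k1 v1] [k2 v2] /= [] /ei ek; subst k2; have [gi _] := hg k1.
  by move=> /gi ->.
- move=> [k v] /=; have [_ [gc _]] := hg k; move: (gc v); rewrite !inE; exact.
move=> [k1 v1] [k2 v2]; rewrite /= /lex_adj /=.
case: eqP => [<-|nk] /=.
  move=> av; apply/orP; right; rewrite eqxx /=.
  by have [_ [_ ga]] := hg k1; apply: ga.
move=> _; apply/orP; left; apply: ea => /=; exact/eqP.
Qed.

Theorem mainTheorem2 (r : nat) (ai : 'I_r -> nat) (a b : nat)
    (H : 'I_r -> sgraph) (n1 n2 : nat) :
  1 <= r ->
  (forall i, 2 <= ai i) -> 0 < a -> 0 < b ->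
  (forall i, ai i <= a) ->
  (forall i, clique_number (H i) <= b) ->
  is_Fv (fun i => K (ai i)) a.+1 n1 ->
  is_Fv H b.+1 n2 ->
  exists n, is_Fv (fun i => lex (K (ai i)) (H i)) (a * b).+1 n /\ n <= n1 * n2.
Proof.
move=> _ _ _ _ _ _ [[G1 [[nK1 ar1] c1]] _] [[G2 [[nK2 ar2] c2]] _].
apply: exmin; exists (lex G1 G2); split.
  split; [exact: lex_free | exact: lex_arrows].
by rewrite /= card_prod c1 c2.
Qed.
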